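(* For every countably infinite subset $C\subseteq(0,\infty)$ there exists a countable directed graph $E$ such that $$\{\beta_v : v\in\textstyle\bigcup_{\beta>0}E^0_{\beta\text{-reg}}\}=C.$$
   Context: For a countable directed graph $E$ and $v\in E^0$, $E^nv$ is the set of paths of length $n$ ending at $v$, $Z_v(\beta)=\sum_{n\ge0}|E^nv|e^{-\beta n}\in[0,\infty]$, $E^0_{\beta\text{-reg}}=\{v\in E^0:Z_v(\beta)<\infty\}$, and $\beta_v=\inf\{\beta\in\mathbb R:Z_v(\beta)<\infty\}$ (the critical inverse temperature of $v$). *)

(* Defs.v *)
From HB Require Import structures.
From mathcomp Require Import all_boot all_order all_algebra.
From mathcomp Require Import all_classical all_reals.
From mathcomp Require Import ereal topology normedtype sequences esum exp.
Set Implicit Arguments. Unset Strict Implicit. Unset Printing Implicit Defensive.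
Import Order.TTheory GRing.Theory Num.Theory.
Local Open Scope classical_set_scope.
Local Open Scope ring_scope.

(* A countable directed graph E = (E^0, E^1, r, s): vertices of a countType V,
   edges of a countType Ed, range and source maps r s : Ed -> V. *)

Fixpoint is_chain (V : Type) (Ed : choiceType) (s r : Ed -> V) (mu : seq Ed) : Prop :=
  match mu with
  | e :: ((f :: _) as t) => s e = r f /\ is_chain s r t
  | _ => True
  end.

(* E^n v : paths of length n ending at v (range r(mu) = r(e_1) = v);
   the unique path of length 0 ending at v is the vertex v itself, represented
   by the empty edge sequence. *)
Definition paths_to (V : Type) (Ed : choiceType) (s r : Ed -> V) (n : nat) (v : V) : set (seq Ed) :=
  [set mu | size mu = n /\ is_chain s r mu /\
            (match mu with [::] => True | e :: _ => r e = v end)].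

Definition card_paths_to (R : realType) (V : Type) (Ed : choiceType) (s r : Ed -> V)
    (n : nat) (v : V) : \bar R :=
  (\esum_(mu in paths_to s r n v) 1)%E.

Definition Zpart (R : realType) (V : Type) (Ed : choiceType) (s r : Ed -> V) (v : V) (beta : R)
    : \bar R :=
  (\sum_(0 <= n <oo) (card_paths_to R s r n v * (expR (- beta * n%:R))%:E))%E.

Definition beta_reg (R : realType) (V : Type) (Ed : choiceType) (s r : Ed -> V) (beta : R) : set V :=
  [set v | (Zpart s r v beta < +oo)%E].

Definition crit_temp (R : realType) (V : Type) (Ed : choiceType) (s r : Ed -> V) (v : V) : \bar R :=
  ereal_inf [set (b%:E)%E | b in [set b : R | (Zpart s r v b < +oo)%E]].

(* Main.v *)
Require Import Defs.
From HB Require Import structures.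
From mathcomp Require Import all_boot all_order all_algebra.
From mathcomp Require Import all_classical all_reals.
From mathcomp Require Import ereal topology normedtype sequences esum exp.
From mathcomp Require Import zify lra.
Import Order.TTheory GRing.Theory Num.Theory.
Local Open Scope classical_set_scope.
Local Open Scope ring_scope.

Section General.
Variables (R : realType) (V : Type) (Ed : choiceType) (s r : Ed -> V).

Lemma paths_to0 v : paths_to s r 0 v = [set [::]].
Proof.
apply/seteqP; split => mu /=.
  by case=> /size0nil ->.
by move=> ->.
Qed.

Lemma card_paths0 v : card_paths_to R s r 0 v = 1%E.
Proof. by rewrite /card_paths_to paths_to0 esum_set1. Qed.

Lemma paths_toS n v : paths_to s r n.+1 v =
  (fun p => p.1 :: p.2) @` ([set e | r e = v] `*`` (fun e => paths_to s r n (s e))).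
Proof.
apply/seteqP; split => mu /=.
  case: mu => [|e t] /=.
    by case.
  move=> [sz [ch he]].
  exists (e, t) => //=; split => //; split; first by case: sz.
  by case: t sz ch => [|f t'] //= _ [-> ch].
move=> [[e t] /= [he [sz [ch ht]]] <-] /=; split; first by rewrite /= sz.
split => //.
by case: t sz ch ht => [|f t'] //= _ ch ->.
Qed.

Lemma card_pathsS n v : card_paths_to R s r n.+1 v =
  (\esum_(e in [set e | r e = v]) card_paths_to R s r n (s e))%E.
Proof.
rewrite /card_paths_to paths_toS esum_image; last first.
  by move=> [e1 t1] [e2 t2] _ _ /= [-> ->].
by rewrite esum_esum.
Qed.

End General.


Section Graph.
Variables (R : realType) (c : nat -> R).
Hypothesis cpos : forall i, 0 < c i.

Definition F i k := Num.truncn (c i * k%:R / ln (2:R)).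

Lemma a_gt0 : 0 < ln (2:R).
Proof. by apply: ln_gt0; rewrite ltr1n. Qed.

Lemma F_mono i : {homo F i : m n / (m <= n)%N}.
Proof.
move=> m n mn; apply: le_truncn; rewrite ler_pM2r ?invr_gt0 ?a_gt0 //.
by rewrite ler_pM2l // ler_nat.
Qed.

Lemma F_bounds i k : (F i k)%:R * ln 2 <= c i * k%:R < ((F i k)%:R + 1) * ln 2.
Proof.
have a0 := a_gt0.
have /andP[h1 h2] : (F i k)%:R <= c i * k%:R / ln 2 < (F i k).+1%:R.
  apply: truncn_itv; apply: divr_ge0; last exact: ltW.
  by apply: mulr_ge0; [exact: ltW|].
by rewrite -ler_pdivlMr // -ltr_pdivrMr // h1 natr1.
Qed.

Definition nb i k := (2 ^ (F i k.+1 - F i k))%N.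
Definition valid (x : nat * nat * nat) : bool := (x.2 < nb x.1.1 x.1.2)%N.
Definition GEd := {x : nat * nat * nat | valid x}.
Definition gs (e : GEd) : nat * nat := ((val e).1.1, (val e).1.2.+1).
Definition gr (e : GEd) : nat * nat := ((val e).1.1, (val e).1.2).
Definition Pc i m n := (2 ^ (F i (m + n) - F i m))%N.

Lemma valid0 : valid (0, 0, 0)%N.
Proof. by rewrite /valid /nb expn_gt0. Qed.
Definition e0 : GEd := exist (fun x => is_true (valid x)) (0, 0, 0)%N valid0.

Lemma esum_edges i m (K : \bar R) : (0 <= K)%E ->
  (\esum_(e in [set e | gr e = (i, m)]) K = K *+ nb i m)%E.
Proof.
move=> K0.
rewrite (@reindex_esum R nat GEd `I_(nb i m) _ (fun j => insubd e0 (i, m, j))).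
  rewrite esum_fset // -fsbig_ord.
  by rewrite sumr_const card_ord.
split.
- move=> j /= jlt; rewrite /gr insubdK //.
- move=> j1 j2 /= h1 h2 /(congr1 val).
  move: h1 h2; rewrite !inE /= => h1 h2.
  rewrite !insubdK; [by case|exact: h2|exact: h1].
- move=> [[[i' m'] j] v]; rewrite /gr /= => -[<- <-]; exists j => //.
  by apply: val_inj; rewrite /= insubdK.
Qed.

Lemma gsE e i m : gr e = (i, m) -> gs e = (i, m.+1).
Proof. by rewrite /gr /gs; case: (\val e) => [[a b] j] /= [-> ->]. Qed.

Lemma card_G n i m : card_paths_to R gs gr n (i, m) = ((Pc i m n)%:R)%:E.
Proof.
elim: n m => [|n IH] m.
  by rewrite card_paths0 /Pc addn0 subnn expn0.
rewrite card_pathsS.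
rewrite (eq_esum (b := fun _ => ((Pc i m.+1 n)%:R)%:E)); last first.
  by move=> e /= he; rewrite (@gsE e i m he); exact: IH.
rewrite (@esum_edges i m) ?lee_fin // -EFin_natmul -mulrnA /Pc /nb -expnD.
have h1 := @F_mono i _ _ (leqnSn m).
have h2 := @F_mono i _ _ (leq_addr n m.+1).
rewrite addSnnS; congr (_%:R%:E); congr (2 ^ _)%N.
rewrite addSnnS in h2; lia.
Qed.

End Graph.


Lemma series_le (R : realType) (u : nat -> R) B : (forall n, 0 <= u n) ->
  (forall N, \sum_(0 <= k < N) u k <= B) ->
  (\sum_(0 <= n <oo) (u n)%:E <= B%:E)%E.
Proof.
move=> u0 hB.
have h : forall n, (0 <= n)%N -> xpredT n -> (0 <= (u n)%:E)%E.
  by move=> n _ _; rewrite lee_fin.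
move: (ereal_nondecreasing_series h) => /ereal_nondecreasing_cvgn/cvg_lim => ->//.
apply: ub_ereal_sup => _ [N _ <-] /=.
by rewrite sumEFin lee_fin.
Qed.

Section Analysis.
Variables (R : realType) (c : nat -> R).
Hypothesis cpos : forall i, 0 < c i.

Lemma Pc_real i m n : (Pc R c i m n)%:R = expR (((F R c i (m+n))%:R - (F R c i m)%:R) * ln 2) :> R.
Proof.
have h := @F_mono R c cpos i _ _ (leq_addr n m).
rewrite /Pc natrX -natrB // expRM_natl lnK //.
by rewrite posrE ltr0n.
Qed.

Lemma Pc_bounds i m n : expR (c i * n%:R - ln 2) <= (Pc R c i m n)%:R <= expR (c i * n%:R + ln 2).
Proof.
rewrite Pc_real !ler_expR.
have /andP[h1 h2] := @F_bounds R c cpos i (m + n).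
have /andP[h3 h4] := @F_bounds R c cpos i m.
rewrite natrD mulrDr in h1 h2.
rewrite mulrDl in h2 h4.
rewrite mulrBl; apply/andP; split; lra.
Qed.

Lemma ZpartE i m (b : R) : Zpart (gs R c) (gr R c) (i, m) b =
  (\sum_(0 <= n <oo) ((Pc R c i m n)%:R * expR (- b * n%:R))%:E)%E.
Proof.
rewrite /Zpart; apply: congr_lim; apply/funext => N; apply: eq_bigr => n _.
by rewrite (@card_G R c cpos) EFinM.
Qed.

Lemma Zfin i m (b : R) : c i < b -> (Zpart (gs R c) (gr R c) (i, m) b < +oo)%E.
Proof.
move=> hb; rewrite ZpartE.
have z0 : 0 < expR (c i - b) by apply: expR_gt0.
have z1 : `|expR (c i - b)| < 1 by rewrite gtr0_norm // expR_lt1 subr_lt0.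
apply: (@le_lt_trans _ _ (expR (ln 2) * (1 - expR (c i - b))^-1)%:E); last by rewrite ltry.
apply: series_le.
  by move=> n; rewrite mulr_ge0 // expR_ge0.
move=> N.
apply: (@le_trans _ _ (series (geometric (expR (ln 2)) (expR (c i - b))) N)); last first.
  by apply: geometric_le_lim => //; rewrite expR_ge0.
rewrite seriesEnat /=; apply: ler_sum => k _; rewrite /geometric /=.
have /andP[_ h] := Pc_bounds i m k.
apply: (le_trans (ler_wpM2r (expR_ge0 _) h)).
rewrite -expRD -expRM_natr -expRD ler_expR.
rewrite mulrBl mulNr; lra.
Qed.

Lemma Zinf i m (b : R) : b < c i -> ~ (Zpart (gs R c) (gr R c) (i, m) b < +oo)%E.
Proof.
rewrite ZpartE => hb.
have h0 : forall k, expR (- ln 2) <= (Pc R c i m k)%:R * expR (- b * k%:R).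
  move=> k; have /andP[h _] := Pc_bounds i m k.
  apply: le_trans (ler_wpM2r (expR_ge0 _) h).
  rewrite -expRD ler_expR.
  have : 0 <= (c i - b) * k%:R by rewrite mulr_ge0 // subr_ge0 ltW.
  rewrite mulrBl mulNr; lra.
have S0 : (0 <= \sum_(0 <= n <oo) ((Pc R c i m n)%:R * expR (- b * n%:R))%:E)%E.
  by apply: nneseries_ge0 => n _ _; rewrite lee_fin mulr_ge0 // expR_ge0.
move=> hZ.
set S := (\sum_(0 <= n <oo) _)%E in S0 hZ.
have Sfin : S \is a fin_num by rewrite ge0_fin_numE.
set z := fine S.
set N := (Num.truncn (z * expR (ln 2))).+1.
have hN : (\sum_(0 <= k < N) ((Pc R c i m k)%:R * expR (- b * k%:R))%:E <= S)%E.
  by apply: nneseries_lim_ge => n _ _; rewrite lee_fin mulr_ge0 // expR_ge0.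
have h1 : ((expR (- ln 2) *+ N)%:E <= S)%E.
  apply: le_trans hN.
  rewrite EFin_natmul.
  have -> : ((expR (- ln (2:R)))%:E *+ N = \sum_(0 <= k < N) (expR (- ln (2:R)))%:E)%E.
    by rewrite sumr_const_nat subn0.
  by apply: lee_sum => k _; rewrite lee_fin.
rewrite -(fineK Sfin) lee_fin -/z in h1.
move: h1; rewrite -[_ *+ N]mulr_natr expRN => h1.
have h2 : z * expR (ln 2) < N%:R by apply: truncnS_gt.
have : z < N%:R / expR (ln 2) by rewrite ltr_pdivlMr // expR_gt0.
rewrite mulrC; lra.
Qed.

Lemma crit_G i m : crit_temp R (gs R c) (gr R c) (i, m) = (c i)%:E.
Proof.
apply/eqP; rewrite eq_le; apply/andP; split.
  apply/lee_addgt0Pr => e e0; apply: ereal_inf_lbound.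
  exists (c i + e); last by rewrite EFinD.
  by apply: Zfin; rewrite ltrDl.
apply: le_ereal_inf_tmp => _ [b hb <-]; rewrite lee_fin.
case: (leP (c i) b) => // hlt; exfalso; exact: (@Zinf i m b hlt hb).
Qed.

Lemma reg_G i m : (\bigcup_(beta in [set b : R | 0 < b]) beta_reg (gs R c) (gr R c) beta) (i, m).
Proof.
exists (c i + 1); first by rewrite /= addr_gt0.
by apply: Zfin; rewrite ltrDl.
Qed.

End Analysis.


Theorem proposition6p12 (R : realType) (C : set R) :
  C `<=` [set x : R | 0 < x] -> countable C -> infinite_set C ->
  exists (V Ed : countType) (s r : Ed -> V),
    [set crit_temp R s r v | v in \bigcup_(beta in [set b : R | 0 < b]) beta_reg s r beta]
    = [set (c%:E)%E | c in C].
Proof.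
move=> Cpos Ccount Cinf.
have [c0 Cc0] := infinite_setN0 Cinf.
have [f finj] := countable_injP _ Ccount.
pose cs i := xget c0 [set x | C x /\ f x = i].
have csC i : C (cs i).
  rewrite /cs; case: (pselect (exists x, C x /\ f x = i)) => [hx|hx].
    by have [] := xgetPex c0 hx.
  by rewrite xgetPN // => x hx'; apply: hx; exists x.
have csf x : C x -> cs (f x) = x.
  move=> Cx; apply: xget_unique => // y [Cy fy].
  by apply: finj; rewrite ?inE.
have cspos i : 0 < cs i := Cpos _ (csC i).
exists ((nat * nat)%type : countType), (GEd R cs), (gs R cs), (gr R cs).
apply/seteqP; split.
  move=> _ [[i m] _ <-]; rewrite crit_G //; by exists (cs i).
move=> _ [x Cx <-].
exists (f x, 0%N); first exact: reg_G.
by rewrite crit_G // csf.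
Qed.
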